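(* For $p,q>0$, $x\ge0$ and $0\le y\le 1$, $$B_{p,q}(x,y)=B_{p,q+1}(x,y)-\frac{e^{-x/2}}{qB(p,q)}\,y^p(1-y)^q M\!\left(p+q,p,\tfrac12xy\right),$$ and the same identity holds for $\bar B_{p,q}(x,y)$ with the sign of the last term reversed. Moreover, if in addition $p>1$, then $$B_{p,q}(x,y)=B_{p-1,q+1}(x,y)-\frac{e^{-x/2}}{qB(p,q)}\,y^{p-1}(1-y)^q M\!\left(p+q,p,\tfrac12xy\right).$$
   Context: For $p,q>0$ and $0\le y\le 1$, $I_y(p,q)=\frac{1}{B(p,q)}\int_0^y t^{p-1}(1-t)^{q-1}\,dt$ is the regularized incomplete beta function, with $B(p,q)=\Gamma(p)\Gamma(q)/\Gamma(p+q)$. The cumulative noncentral beta distribution is $B_{p,q}(x,y)=e^{-x/2}\sum_{j=0}^\infty \frac{1}{j!}\left(\frac x2\right)^j I_y(p+j,q)$ for $x\ge0$, and its complement is $\bar B_{p,q}(x,y)=1-B_{p,q}(x,y)$. $M(a,b,z)=\sum_{n\ge0}\frac{(a)_n}{(b)_n}\frac{z^n}{n!}$ is Kummer's confluent hypergeometric function, and $(a)_n$ is the Pochhammer symbol. *)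

(* Defs.v *)
From Stdlib Require Import Reals Lra Arith ClassicalEpsilon.
Open Scope R_scope.

(* real power with 0^a := 0 (used only with a > 0, or at measure-zero points) *)
Definition rpow (x a : R) : R :=
  if Rlt_dec 0 x then Rpower x a else 0.

(* l is the (improper) Riemann integral of f over the open interval (a,b):
   limit of the proper Riemann integrals over [u,v] as u -> a+, v -> b-. *)
Definition is_improper_int (f : R -> R) (a b l : R) : Prop :=
  forall eps, 0 < eps -> exists delta, 0 < delta /\
    forall u v, a < u -> u < a + delta -> b - delta < v -> v < b -> u < v ->
      exists pr : Riemann_integrable f u v, Rabs (RiemannInt pr - l) < eps.

Definition improper_int (f : R -> R) (a b : R) : R :=
  if Rlt_dec a b then epsilon (inhabits 0) (is_improper_int f a b) else 0.

Definition beta_integrand (p q : R) (t : R) : R :=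
  rpow t (p - 1) * rpow (1 - t) (q - 1).

Definition Beta (p q : R) : R := improper_int (beta_integrand p q) 0 1.

Definition Ibeta (y p q : R) : R :=
  improper_int (beta_integrand p q) 0 y / Beta p q.

Definition series (u : nat -> R) : R :=
  epsilon (inhabits 0) (fun l => Un_cv (fun N => sum_f_R0 u N) l).

Fixpoint poch (a : R) (n : nat) : R :=
  match n with
  | O => 1
  | S k => poch a k * (a + INR k)
  end.

Definition kummerM (a b z : R) : R :=
  series (fun n => poch a n / poch b n * z ^ n / INR (Factorial.fact n)).

Definition ncbeta (p q x y : R) : R :=
  exp (- x / 2) * series (fun j => / INR (Factorial.fact j) * (x / 2) ^ j * Ibeta y (p + INR j) q).

Definition ncbetaC (p q x y : R) : R := 1 - ncbeta p q x y.

(* Main.v *)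
Require Import Defs.
From Stdlib Require Import Reals Lra ClassicalEpsilon.
From Coquelicot Require Import Coquelicot.
Open Scope R_scope.

Lemma dpow c t : 0 < t -> is_derive (fun t => Rpower t c) t (c * Rpower t (c-1)).
Proof. intros; apply is_derive_Reals, derivable_pt_lim_power; auto. Qed.

Lemma dpow1 c t : t < 1 -> is_derive (fun t => Rpower (1-t) c) t (- (c * Rpower (1-t) (c-1))).
Proof.
  intros H.
  replace (- (c * Rpower (1-t) (c-1))) with ((-1) * (c * Rpower (1-t) (c-1))) by ring.
  apply (is_derive_comp (fun s => Rpower s c) (fun t => 1 - t)).
  - apply dpow; lra.
  - auto_derive; auto; ring.
Qed.

Lemma cpow c t : 0 < t -> continuous (fun t => Rpower t c) t.
Proof. intros; apply (ex_derive_continuous (fun t => Rpower t c)); eexists; apply dpow; auto. Qed.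

Lemma cpow1 c t : t < 1 -> continuous (fun t => Rpower (1-t) c) t.
Proof. intros; apply (ex_derive_continuous (fun t => Rpower (1-t) c)); eexists; apply dpow1; auto. Qed.

Definition fR a b t := Rpower t (a-1) * Rpower (1-t) (b-1).
Definition hR a b t := Rpower t a * Rpower (1-t) b.

Lemma cfR a b t : 0 < t < 1 -> continuous (fR a b) t.
Proof.
  intros H; unfold fR.
  apply (continuous_mult (fun t => Rpower t (a-1)) (fun t => Rpower (1-t) (b-1))).
  apply cpow; lra. apply cpow1; lra.
Qed.

Lemma dhR a b t : 0 < t < 1 -> is_derive (hR a b) t (a * fR a (b+1) t - b * fR (a+1) b t).
Proof.
  intros H; unfold hR, fR.
  replace (a * (Rpower t (a - 1) * Rpower (1 - t) (b + 1 - 1)) -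
    b * (Rpower t (a + 1 - 1) * Rpower (1 - t) (b - 1))) with
   (a * Rpower t (a-1) * Rpower (1-t) b + Rpower t a * (- (b * Rpower (1-t) (b-1)))).
  apply (is_derive_mult (fun t => Rpower t a) (fun t => Rpower (1-t) b)).
  apply dpow; lra. apply dpow1; lra. intros; simpl; apply Rmult_comm.
  replace (b+1-1) with b by ring. replace (a+1-1) with a by ring. ring.
Qed.

Lemma beta_fR a b t : 0 < t < 1 -> beta_integrand a b t = fR a b t.
Proof.
  intros H; unfold beta_integrand, rpow, fR.
  destruct (Rlt_dec 0 t); [|lra]. destruct (Rlt_dec 0 (1-t)); [|lra]. auto.
Qed.

Lemma Rpow_pos t c : 0 < Rpower t c.
Proof. unfold Rpower; apply exp_pos. Qed.

Lemma Rpow_le1 t c : 0 < t <= 1 -> 0 <= c -> Rpower t c <= 1.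
Proof.
  intros H Hc; unfold Rpower. rewrite <- exp_0.
  assert (ln t <= 0). { rewrite <- ln_1. destruct (Req_dec t 1). subst; lra. left; apply ln_increasing; lra. }
  destruct (Req_dec (c * ln t) 0) as [E|E]. rewrite E; lra.
  left; apply exp_increasing. nra.
Qed.

Lemma Rpow_S t c : 0 < t -> Rpower t c = t * Rpower t (c - 1).
Proof.
  intros H. rewrite <- (Rpower_1 t) at 2 by auto. rewrite <- Rpower_plus. f_equal; ring.
Qed.

Lemma fR_split a b t : 0 < t < 1 -> fR a b t = fR a (b+1) t + fR (a+1) b t.
Proof.
  intros H; unfold fR. replace (b+1-1) with b by ring. replace (a+1-1) with a by ring.
  rewrite (Rpow_S (1-t) b) by lra. rewrite (Rpow_S t a) by lra. ring.
Qed.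

Lemma fR_bound a b t : 0 < a -> 0 < b -> 0 < t < 1 ->
  0 <= fR a b t <= Rpower t (a-1) + Rpower (1-t) (b-1).
Proof.
  intros Ha Hb H. split.
  unfold fR; left; apply Rmult_lt_0_compat; apply Rpow_pos.
  rewrite fR_split by auto. unfold fR. replace (b+1-1) with b by ring. replace (a+1-1) with a by ring.
  pose proof (Rpow_le1 (1-t) b ltac:(lra) ltac:(lra)).
  pose proof (Rpow_le1 t a ltac:(lra) ltac:(lra)).
  pose proof (Rpow_pos t (a-1)). pose proof (Rpow_pos (1-t) (b-1)).
  set (A := Rpower t (a-1)) in *. set (B := Rpower (1-t) (b-1)) in *. idtac.
  set (C := Rpower (1-t) b) in *. set (D := Rpower t a) in *.
  assert (A * C <= A * 1) by (apply Rmult_le_compat_l; lra).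
  assert (D * B <= 1 * B) by (apply Rmult_le_compat_r; lra).
  lra.
Qed.

Lemma cfR' a b u v : 0 < u -> u <= v -> v < 1 -> forall z, Rmin u v <= z <= Rmax u v -> continuous (fR a b) z.
Proof.
  intros Hu Huv Hv z Hz. apply cfR. unfold Rmin, Rmax in Hz. destruct (Rle_dec u v); lra.
Qed.

Lemma exfR a b u v : 0 < u -> u <= v -> v < 1 -> ex_RInt (fR a b) u v.
Proof. intros; apply (ex_RInt_continuous (fR a b)); apply cfR'; auto. Qed.

Lemma exB a b u v : 0 < u -> u <= v -> v < 1 -> ex_RInt (beta_integrand a b) u v.
Proof.
  intros. apply (ex_RInt_ext (fR a b)). 2: apply exfR; auto.
  intros z Hz. symmetry; apply beta_fR. unfold Rmin, Rmax in Hz. destruct (Rle_dec u v); lra.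
Qed.

Lemma RInt_B a b u v : 0 < u -> u <= v -> v < 1 -> RInt (beta_integrand a b) u v = RInt (fR a b) u v.
Proof.
  intros. apply RInt_ext.
  intros z Hz. apply beta_fR. unfold Rmin, Rmax in Hz. destruct (Rle_dec u v); lra.
Qed.

Definition kR a b t := /a * Rpower t a - /b * Rpower (1-t) b.

Lemma RInt_maj a b u v : 0 < a -> 0 < b -> 0 < u -> u <= v -> v < 1 ->
  RInt (fun t => Rpower t (a-1) + Rpower (1-t) (b-1)) u v = kR a b v - kR a b u.
Proof.
  intros Ha Hb Hu Huv Hv. apply is_RInt_unique.
  apply (is_RInt_derive (kR a b)).
  - intros z Hz. unfold Rmin, Rmax in Hz. destruct (Rle_dec u v); [|lra].
    unfold kR.
    assert (H1 := is_derive_scal _ z (/a) _ (dpow a z ltac:(lra))).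
    assert (H2 := is_derive_scal _ z (/b) _ (dpow1 b z ltac:(lra))).
    pose proof (is_derive_minus _ _ _ _ _ H1 H2) as H3.
    replace (Rpower z (a - 1) + Rpower (1 - z) (b - 1)) with
      (minus (/a * (a * Rpower z (a-1))) (/b * (- (b * Rpower (1-z) (b-1))))).
    exact H3. unfold minus, plus, opp; simpl; field; lra.
  - intros z Hz. unfold Rmin, Rmax in Hz. destruct (Rle_dec u v); [|lra].
    apply (continuous_plus (fun t => Rpower t (a-1)) (fun t => Rpower (1-t) (b-1))).
    apply cpow; lra. apply cpow1; lra.
Qed.

Lemma RInt_fR_bound a b u v : 0 < a -> 0 < b -> 0 < u -> u <= v -> v < 1 ->
  0 <= RInt (fR a b) u v <= 1/a + 1/b.
Proof.
  intros Ha Hb Hu Huv Hv. split.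
  - apply RInt_ge_0; auto. apply exfR; lra. intros; apply fR_bound; lra.
  - eapply Rle_trans. apply RInt_le; auto. apply exfR; lra.
    apply (ex_RInt_continuous (fun t => Rpower t (a-1) + Rpower (1-t) (b-1))). intros z Hz. unfold Rmin, Rmax in Hz. destruct (Rle_dec u v); [|lra].
    apply (continuous_plus (fun t => Rpower t (a-1)) (fun t => Rpower (1-t) (b-1))).
    apply cpow; lra. apply cpow1; lra.
    intros; apply fR_bound; lra.
    rewrite RInt_maj by auto. unfold kR. unfold Rdiv in *.
    pose proof (Rpow_le1 v a ltac:(lra) ltac:(lra)).
    pose proof (Rpow_le1 (1-u) b ltac:(lra) ltac:(lra)).
    pose proof (Rpow_pos u a). pose proof (Rpow_pos (1-v) b).
    assert (Rpower v a / a <= 1/a) by (apply Rmult_le_compat_r; [left; apply Rinv_0_lt_compat|]; lra).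
    assert (Rpower (1-u) b / b <= 1/b) by (apply Rmult_le_compat_r; [left; apply Rinv_0_lt_compat|]; lra).
    assert (0 < Rpower u a / a) by (apply Rdiv_lt_0_compat; lra).
    assert (0 < Rpower (1-v) b / b) by (apply Rdiv_lt_0_compat; lra).
    lra.
Qed.

Definition impr f y l := forall eps, 0 < eps -> exists d, 0 < d /\
  forall u v, 0 < u -> u < d -> y - d < v -> v < y -> u < v ->
    ex_RInt f u v /\ Rabs (RInt f u v - l) < eps.

Lemma impr_is f y l : impr f y l -> is_improper_int f 0 y l.
Proof.
  intros H eps He. destruct (H eps He) as [d [Hd Hd']]. exists d; split; auto.
  intros u v H1 H2 H3 H4 H5. rewrite Rplus_0_l in H2.
  destruct (Hd' u v H1 H2 H3 H4 H5) as [Hex Hl].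
  exists (ex_RInt_Reals_0 _ _ _ Hex). rewrite <- RInt_Reals. auto.
Qed.

Lemma improper_unique f y l1 l2 : 0 < y -> is_improper_int f 0 y l1 -> is_improper_int f 0 y l2 -> l1 = l2.
Proof.
  intros Hy H1 H2.
  apply Rminus_diag_uniq. apply Rabs_eq_0.
  apply Rle_antisym; [|apply Rabs_pos].
  apply Rnot_lt_le; intro Hlt.
  set (e := Rabs (l1 - l2) / 2).
  assert (He : 0 < e) by (unfold e; lra).
  destruct (H1 e He) as [d1 [Hd1 H1']]. destruct (H2 e He) as [d2 [Hd2 H2']].
  set (d := Rmin (Rmin d1 d2) (y/2)).
  assert (0 < d) by (unfold d; repeat apply Rmin_pos; lra).
  assert (d <= d1 /\ d <= d2 /\ d <= y/2) as [? [? ?]].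
  { unfold d. pose proof (Rmin_l (Rmin d1 d2) (y/2)). pose proof (Rmin_r (Rmin d1 d2) (y/2)).
    pose proof (Rmin_l d1 d2). pose proof (Rmin_r d1 d2). lra. }
  destruct (H1' (d/2) (y - d/2)) as [pr1 Hp1]; try lra.
  destruct (H2' (d/2) (y - d/2)) as [pr2 Hp2]; try lra.
  rewrite (RiemannInt_P5 pr1 pr2) in Hp1.
  assert (Rabs (l1 - l2) <= Rabs (RiemannInt pr2 - l2) + Rabs (RiemannInt pr2 - l1)).
  { replace (l1 - l2) with ((RiemannInt pr2 - l2) - (RiemannInt pr2 - l1)) by ring.
    eapply Rle_trans. apply Rabs_triang. rewrite Rabs_Ropp. lra. }
  unfold e in *. lra.
Qed.

Lemma improper_val f y l : 0 < y -> is_improper_int f 0 y l -> improper_int f 0 y = l.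
Proof.
  intros Hy H. unfold improper_int. destruct (Rlt_dec 0 y); [|lra].
  apply (improper_unique f y); auto.
  apply (epsilon_spec (inhabits 0) (is_improper_int f 0 y)). exists l; auto.
Qed.

Lemma chasles f a b c : ex_RInt f a b -> ex_RInt f b c -> RInt f a b + RInt f b c = RInt f a c.
Proof. intros; apply (RInt_Chasles f); auto. Qed.

Definition E a b y r := exists u v, 0 < u /\ u < v /\ v < y /\ r = RInt (fR a b) u v.

Lemma E_lub a b y : 0 < a -> 0 < b -> 0 < y <= 1 -> {m | is_lub (E a b y) m}.
Proof.
  intros Ha Hb Hy. apply completeness.
  - exists (1/a + 1/b). intros r [u [v [H1 [H2 [H3 ->]]]]]. apply RInt_fR_bound; lra.
  - exists (RInt (fR a b) (y/3) (2*y/3)). exists (y/3), (2*y/3). repeat split; try lra.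
Qed.

Lemma lub_impr a b y m : 0 < a -> 0 < b -> 0 < y <= 1 -> is_lub (E a b y) m ->
  impr (beta_integrand a b) y m.
Proof.
  intros Ha Hb Hy [Hub Hleast] eps He.
  assert (exists r, E a b y r /\ m - eps < r) as [r [[u0 [v0 [H1 [H2 [H3 Hr]]]]] Hr2]].
  { apply Classical_Prop.NNPP; intro Hn. assert (is_upper_bound (E a b y) (m - eps)).
    { intros r Er. apply Rnot_lt_le; intro; apply Hn; exists r; auto. }
    specialize (Hleast _ H); lra. }
  exists (Rmin u0 (y - v0)). split. apply Rmin_pos; lra.
  intros u v Hu Hud Hvd Hv Huv.
  pose proof (Rmin_l u0 (y - v0)). pose proof (Rmin_r u0 (y - v0)).
  split. apply exB; lra.
  rewrite RInt_B by lra.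
  assert (RInt (fR a b) u v <= m) by (apply Hub; exists u, v; repeat split; lra).
  assert (RInt (fR a b) u v = RInt (fR a b) u u0 + (RInt (fR a b) u0 v0 + RInt (fR a b) v0 v)).
  { rewrite (chasles _ u0 v0 v) by (apply exfR; lra). rewrite (chasles _ u u0 v) by (apply exfR; lra). auto. }
  pose proof (RInt_fR_bound a b u u0 Ha Hb ltac:(lra) ltac:(lra) ltac:(lra)).
  pose proof (RInt_fR_bound a b v0 v Ha Hb ltac:(lra) ltac:(lra) ltac:(lra)).
  apply Rabs_def1; lra.
Qed.

Definition J a b y := improper_int (beta_integrand a b) 0 y.

Lemma J_spec a b y : 0 < a -> 0 < b -> 0 < y <= 1 ->
  is_lub (E a b y) (J a b y) /\ impr (beta_integrand a b) y (J a b y).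
Proof.
  intros Ha Hb Hy. destruct (E_lub a b y Ha Hb Hy) as [m Hm].
  assert (impr (beta_integrand a b) y m) by (apply lub_impr; auto).
  unfold J; rewrite (improper_val _ y m); auto. lra. apply impr_is; auto.
Qed.

Lemma J_0 a b : J a b 0 = 0.
Proof. unfold J, improper_int. destruct (Rlt_dec 0 0); auto; lra. Qed.

Lemma J_nonneg a b y : 0 < a -> 0 < b -> 0 <= y <= 1 -> 0 <= J a b y.
Proof.
  intros Ha Hb Hy. destruct (Req_dec y 0). subst; rewrite J_0; lra.
  destruct (J_spec a b y Ha Hb ltac:(lra)) as [[Hub _] _].
  eapply Rle_trans. 2: apply (Hub (RInt (fR a b) (y/3) (2*y/3))).
  apply RInt_fR_bound; lra. exists (y/3), (2*y/3). repeat split; lra.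
Qed.

Lemma J_le1 a b y : 0 < a -> 0 < b -> 0 <= y <= 1 -> J a b y <= J a b 1.
Proof.
  intros Ha Hb Hy. destruct (Req_dec y 0). subst; rewrite J_0. apply J_nonneg; lra.
  destruct (J_spec a b y Ha Hb ltac:(lra)) as [[_ Hl] _].
  destruct (J_spec a b 1 Ha Hb ltac:(lra)) as [[Hub _] _].
  apply Hl. intros r [u [v [H1 [H2 [H3 ->]]]]]. apply Hub. exists u, v. repeat split; lra.
Qed.

Lemma J_pos a b : 0 < a -> 0 < b -> 0 < J a b 1.
Proof.
  intros Ha Hb.
  destruct (J_spec a b 1 Ha Hb ltac:(lra)) as [[Hub _] _].
  eapply Rlt_le_trans. 2: apply (Hub (RInt (fR a b) (1/4) (3/4))).
  2: exists (1/4), (3/4); repeat split; lra.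
  replace 0 with (RInt (fun _ => 0) (1/4) (3/4)).
  2: { rewrite RInt_const. unfold scal; simpl; unfold mult; simpl; ring. }
  apply RInt_lt. lra. intros; apply cfR; lra. intros; apply continuous_const.
  intros; unfold fR; apply Rmult_lt_0_compat; apply Rpow_pos.
Qed.

Lemma impr_comb g h y l1 l2 c1 c2 L : 0 < y -> impr g y l1 -> impr h y l2 ->
  (forall eps, 0 < eps -> exists d, 0 < d /\ forall u v, 0 < u -> u < d -> y - d < v -> v < y -> u < v ->
     Rabs (c1 * RInt g u v + c2 * RInt h u v - L) < eps) ->
  c1 * l1 + c2 * l2 = L.
Proof.
  intros Hy H1 H2 H3.
  apply Rminus_diag_uniq. apply Rabs_eq_0.
  apply Rle_antisym; [|apply Rabs_pos].
  apply Rnot_lt_le; intro Hlt.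
  set (D := Rabs (c1 * l1 + c2 * l2 - L)) in *.
  set (K := Rabs c1 + Rabs c2 + 1).
  assert (HK : 0 < K) by (unfold K; pose proof (Rabs_pos c1); pose proof (Rabs_pos c2); lra).
  set (e := D / (2 * K)).
  assert (He : 0 < e) by (unfold e; apply Rdiv_lt_0_compat; lra).
  destruct (H1 e He) as [d1 [Hd1 H1']]. destruct (H2 e He) as [d2 [Hd2 H2']].
  destruct (H3 e He) as [d3 [Hd3 H3']].
  set (d := Rmin (Rmin d1 d2) (Rmin d3 (y/2))).
  assert (0 < d) by (unfold d; repeat apply Rmin_pos; lra).
  assert (d <= d1 /\ d <= d2 /\ d <= d3 /\ d <= y/2) as [? [? [? ?]]].
  { unfold d. pose proof (Rmin_l (Rmin d1 d2) (Rmin d3 (y/2))). pose proof (Rmin_r (Rmin d1 d2) (Rmin d3 (y/2))).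
    pose proof (Rmin_l d1 d2). pose proof (Rmin_r d1 d2).
    pose proof (Rmin_l d3 (y/2)). pose proof (Rmin_r d3 (y/2)). lra. }
  destruct (H1' (d/2) (y - d/2)) as [_ Hp1]; try lra.
  destruct (H2' (d/2) (y - d/2)) as [_ Hp2]; try lra.
  specialize (H3' (d/2) (y - d/2)); try lra.
  assert (Hp3 : Rabs (c1 * RInt g (d / 2) (y - d / 2) + c2 * RInt h (d / 2) (y - d / 2) - L) < e) by (apply H3'; lra).
  set (R1 := RInt g (d / 2) (y - d / 2)) in *. set (R2 := RInt h (d / 2) (y - d / 2)) in *.
  assert (D <= Rabs c1 * Rabs (R1 - l1) + Rabs c2 * Rabs (R2 - l2) + Rabs (c1 * R1 + c2 * R2 - L)).
  { unfold D. replace (c1 * l1 + c2 * l2 - L) with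
      ((c1 * R1 + c2 * R2 - L) - c1 * (R1 - l1) - c2 * (R2 - l2)) by ring.
    rewrite <- !Rabs_mult.
    eapply Rle_trans. apply Rabs_triang. rewrite Rabs_Ropp.
    eapply Rle_trans. apply Rplus_le_compat_r. apply Rabs_triang. rewrite Rabs_Ropp. lra. }
  assert (Rabs c1 * Rabs (R1 - l1) <= Rabs c1 * e) by (apply Rmult_le_compat_l; [apply Rabs_pos|lra]).
  assert (Rabs c2 * Rabs (R2 - l2) <= Rabs c2 * e) by (apply Rmult_le_compat_l; [apply Rabs_pos|lra]).
  assert (K * e = D / 2) by (unfold e; field; lra).
  unfold K in *. nra.
Qed.

Lemma J_split a b y : 0 < a -> 0 < b -> 0 <= y <= 1 -> J a b y = J a (b+1) y + J (a+1) b y.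
Proof.
  intros Ha Hb Hy. destruct (Req_dec y 0). subst; rewrite !J_0; ring.
  destruct (J_spec a b y) as [_ H0]; try lra.
  destruct (J_spec a (b+1) y) as [_ H1]; try lra.
  destruct (J_spec (a+1) b y) as [_ H2]; try lra.
  symmetry. rewrite <- (Rmult_1_l (J a (b+1) y)), <- (Rmult_1_l (J (a+1) b y)).
  apply (impr_comb (beta_integrand a (b+1)) (beta_integrand (a+1) b) y); auto. lra.
  intros eps He. destruct (H0 eps He) as [d [Hd Hd']]. exists d; split; auto.
  intros u v Hu Hud Hvd Hv Huv. destruct (Hd' u v Hu Hud Hvd Hv Huv) as [_ Hl].
  rewrite !RInt_B in * by lra.
  replace (RInt (fR a b) u v) with (1 * RInt (fR a (b + 1)) u v + 1 * RInt (fR (a + 1) b) u v) in Hl; auto.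
  rewrite !Rmult_1_l. rewrite <- (RInt_plus (fR a (b+1)) (fR (a+1) b)) by (apply exfR; lra).
  apply RInt_ext. intros z Hz. rewrite Rmin_left, Rmax_right in Hz by lra.
  rewrite (fR_split a b z) by lra. auto.
Qed.

Lemma ftc_parts a b u v : 0 < u -> u <= v -> v < 1 ->
  a * RInt (fR a (b+1)) u v - b * RInt (fR (a+1) b) u v = hR a b v - hR a b u.
Proof.
  intros Hu Huv Hv.
  set (df := fun t => a * fR a (b+1) t - b * fR (a+1) b t).
  assert (H1 : is_RInt df u v (minus (hR a b v) (hR a b u))).
  { apply (is_RInt_derive (hR a b) df).
    - intros z Hz. rewrite Rmin_left, Rmax_right in Hz by lra. apply dhR; lra.
    - intros z Hz. rewrite Rmin_left, Rmax_right in Hz by lra. unfold df.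
      apply (continuous_minus (fun t => a * fR a (b+1) t) (fun t => b * fR (a+1) b t)).
      apply (continuous_mult (fun _ => a) (fR a (b+1))). apply continuous_const. apply cfR; lra.
      apply (continuous_mult (fun _ => b) (fR (a+1) b)). apply continuous_const. apply cfR; lra. }
  assert (H2 : is_RInt df u v (a * RInt (fR a (b+1)) u v - b * RInt (fR (a+1) b) u v)).
  { apply (is_RInt_minus (fun t => a * fR a (b+1) t) (fun t => b * fR (a+1) b t)).
    apply (is_RInt_scal (fR a (b+1))). apply (RInt_correct (fR a (b+1))); apply exfR; lra.
    apply (is_RInt_scal (fR (a+1) b)). apply (RInt_correct (fR (a+1) b)); apply exfR; lra. }
  rewrite <- (is_RInt_unique _ _ _ _ H2). rewrite (is_RInt_unique _ _ _ _ H1). reflexivity.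
Qed.

Lemma small_pow c eps : 0 < c -> 0 < eps -> exists d, 0 < d /\ forall t, 0 < t < d -> Rpower t c < eps.
Proof.
  intros Hc He. exists (exp (ln eps / c)). split. apply exp_pos.
  intros t Ht. unfold Rpower. rewrite <- (exp_ln eps) by auto. apply exp_increasing.
  assert (ln t < ln eps / c). { rewrite <- (ln_exp (ln eps / c)). apply ln_increasing; lra. }
  apply (Rmult_lt_compat_l c) in H; auto. replace (c * (ln eps / c)) with (ln eps) in H by (field; lra). lra.
Qed.

Lemma hR_cont a b y eps : 0 < y < 1 -> 0 < eps -> exists d, 0 < d /\
  forall v, Rabs (v - y) < d -> Rabs (hR a b v - hR a b y) < eps.
Proof.
  intros Hy He.
  assert (Hd : derivable_pt (hR a b) y).
  { exists (a * fR a (b+1) y - b * fR (a+1) b y). apply is_derive_Reals. apply dhR; lra. }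
  pose proof (derivable_continuous_pt _ _ Hd) as Hc.
  destruct (Hc eps He) as [alp [Ha Hal]]. exists alp; split; auto.
  intros v Hv. destruct (Req_dec v y). subst. rewrite Rminus_diag, Rabs_R0; auto.
  apply Hal. split. split. constructor. auto. auto.
Qed.

Lemma hR_lim a b y : 0 < a -> 0 < b -> 0 < y <= 1 -> forall eps, 0 < eps -> exists d, 0 < d /\
  forall u v, 0 < u -> u < d -> y - d < v -> v < y ->
  Rabs (hR a b v - hR a b u - rpow y a * rpow (1-y) b) < eps.
Proof.
  intros Ha Hb Hy eps He.
  destruct (small_pow a (eps/2) Ha ltac:(lra)) as [d1 [Hd1 H1]].
  assert (Hu : forall u, 0 < u -> u < d1 -> u < 1 -> 0 < hR a b u < eps/2).
  { intros u H0 Hu1 Hu2. specialize (H1 u ltac:(lra)). unfold hR.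
    pose proof (Rpow_le1 (1-u) b ltac:(lra) ltac:(lra)). pose proof (Rpow_pos u a). pose proof (Rpow_pos (1-u) b).
    split. apply Rmult_lt_0_compat; auto.
    assert (Rpower u a * Rpower (1 - u) b <= Rpower u a * 1) by (apply Rmult_le_compat_l; lra). lra. }
  destruct (Req_dec y 1) as [E|E].
  - subst y. destruct (small_pow b (eps/2) Hb ltac:(lra)) as [d2 [Hd2 H2]].
    exists (Rmin (Rmin d1 d2) 1). split. repeat apply Rmin_pos; lra.
    intros u v H0 Hud Hvd Hv.
    pose proof (Rmin_l (Rmin d1 d2) 1). pose proof (Rmin_r (Rmin d1 d2) 1).
    pose proof (Rmin_l d1 d2). pose proof (Rmin_r d1 d2).
    replace (rpow 1 a * rpow (1-1) b) with 0.
    2: { unfold rpow. replace (1-1) with 0 by ring. destruct (Rlt_dec 0 0); [lra|ring]. }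
    specialize (Hu u H0 ltac:(lra) ltac:(lra)).
    assert (0 < hR a b v < eps/2).
    { specialize (H2 (1-v) ltac:(lra)). unfold hR.
      pose proof (Rpow_le1 v a ltac:(lra) ltac:(lra)). pose proof (Rpow_pos v a). pose proof (Rpow_pos (1-v) b).
      split. apply Rmult_lt_0_compat; auto.
      assert (Rpower v a * Rpower (1 - v) b <= 1 * Rpower (1-v) b) by (apply Rmult_le_compat_r; lra). lra. }
    apply Rabs_def1; lra.
  - destruct (hR_cont a b y (eps/2) ltac:(lra) ltac:(lra)) as [d2 [Hd2 H2]].
    exists (Rmin (Rmin d1 d2) y). split. repeat apply Rmin_pos; lra.
    intros u v H0 Hud Hvd Hv.
    pose proof (Rmin_l (Rmin d1 d2) y). pose proof (Rmin_r (Rmin d1 d2) y).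
    pose proof (Rmin_l d1 d2). pose proof (Rmin_r d1 d2).
    replace (rpow y a * rpow (1-y) b) with (hR a b y).
    2: { unfold rpow, hR. destruct (Rlt_dec 0 y); [|lra]. destruct (Rlt_dec 0 (1-y)); [|lra]. auto. }
    specialize (Hu u H0 ltac:(lra) ltac:(lra)).
    specialize (H2 v). assert (Rabs (v - y) < d2) by (apply Rabs_def1; lra).
    specialize (H2 H6). apply Rabs_def2 in H2.
    apply Rabs_def1; lra.
Qed.

Lemma J_parts a b y : 0 < a -> 0 < b -> 0 <= y <= 1 ->
  a * J a (b+1) y - b * J (a+1) b y = rpow y a * rpow (1-y) b.
Proof.
  intros Ha Hb Hy. destruct (Req_dec y 0).
  { subst; rewrite !J_0. unfold rpow. destruct (Rlt_dec 0 0); [lra|ring]. }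
  destruct (J_spec a (b+1) y) as [_ H1]; try lra.
  destruct (J_spec (a+1) b y) as [_ H2]; try lra.
  replace (a * J a (b + 1) y - b * J (a + 1) b y) with (a * J a (b + 1) y + (-b) * J (a + 1) b y) by ring.
  apply (impr_comb (beta_integrand a (b+1)) (beta_integrand (a+1) b) y); auto. lra.
  intros eps He. destruct (hR_lim a b y Ha Hb ltac:(lra) eps He) as [d [Hd Hd']].
  exists d; split; auto. intros u v Hu Hud Hvd Hv Huv.
  rewrite !RInt_B by lra.
  replace (a * RInt (fR a (b + 1)) u v + - b * RInt (fR (a + 1) b) u v) with
    (hR a b v - hR a b u). apply Hd'; auto.
  rewrite <- ftc_parts by lra. ring.
Qed.

Lemma Beta_J a b : Beta a b = J a b 1.
Proof. reflexivity. Qed.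

Lemma Ibeta_J y a b : Ibeta y a b = J a b y / Beta a b.
Proof. reflexivity. Qed.

Lemma Beta_pos a b : 0 < a -> 0 < b -> 0 < Beta a b.
Proof. intros; rewrite Beta_J; apply J_pos; auto. Qed.

Lemma rpow_0 c : rpow 0 c = 0.
Proof. unfold rpow; destruct (Rlt_dec 0 0); [lra|auto]. Qed.

Lemma Beta_rels a b : 0 < a -> 0 < b ->
  Beta (a+1) b = a / (a+b) * Beta a b /\ Beta a (b+1) = b / (a+b) * Beta a b.
Proof.
  intros Ha Hb. rewrite !Beta_J.
  pose proof (J_split a b 1 Ha Hb ltac:(lra)).
  pose proof (J_parts a b 1 Ha Hb ltac:(lra)).
  replace (1-1) with 0 in H0 by ring. rewrite rpow_0, Rmult_0_r in H0.
  split; rewrite H; field_simplify_eq; try lra; nra.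
Qed.

Lemma I_rec1 y a b : 0 < a -> 0 < b -> 0 <= y <= 1 ->
  Ibeta y a b = Ibeta y a (b+1) - rpow y a * rpow (1-y) b / (b * Beta a b).
Proof.
  intros Ha Hb Hy. rewrite !Ibeta_J. destruct (Beta_rels a b Ha Hb) as [_ E2].
  pose proof (Beta_pos a b Ha Hb).
  rewrite E2, <- (J_parts a b y), (J_split a b y) by auto. field. lra.
Qed.

Lemma I_rec2 y a b : 0 < a -> 0 < b -> 0 <= y <= 1 ->
  Ibeta y (a+1) b = Ibeta y a (b+1) - rpow y a * rpow (1-y) b / (b * Beta (a+1) b).
Proof.
  intros Ha Hb Hy. rewrite !Ibeta_J. destruct (Beta_rels a b Ha Hb) as [E1 E2].
  pose proof (Beta_pos a b Ha Hb).
  rewrite E2, <- (J_parts a b y), E1 by auto. field. lra.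
Qed.

Lemma I_bounds y a b : 0 < a -> 0 < b -> 0 <= y <= 1 -> 0 <= Ibeta y a b <= 1.
Proof.
  intros Ha Hb Hy. rewrite !Ibeta_J. pose proof (Beta_pos a b Ha Hb). rewrite Beta_J in *.
  pose proof (J_nonneg a b y Ha Hb Hy). pose proof (J_le1 a b y Ha Hb Hy).
  split. apply Rmult_le_pos; [lra|left; apply Rinv_0_lt_compat; lra].
  apply (Rmult_le_reg_r (J a b 1)); auto. unfold Rdiv. rewrite Rmult_assoc, Rinv_l; lra.
Qed.

Lemma poch_pos a n : 0 < a -> 0 < poch a n.
Proof.
  intros Ha; induction n; simpl. lra. apply Rmult_lt_0_compat; auto. pose proof (pos_INR n); lra.
Qed.

Lemma Beta_poch p q j : 0 < p -> 0 < q -> Beta (p + INR j) q = Beta p q * poch p j / poch (p+q) j.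
Proof.
  intros Hp Hq. induction j.
  - simpl. rewrite Rplus_0_r. field.
  - rewrite S_INR. replace (p + (INR j + 1)) with (p + INR j + 1) by ring.
    pose proof (pos_INR j).
    destruct (Beta_rels (p + INR j) q ltac:(lra) Hq) as [E1 _]. rewrite E1, IHj. simpl.
    pose proof (poch_pos p j Hp). pose proof (poch_pos (p+q) j ltac:(lra)).
    field. repeat split; lra.
Qed.

Lemma rpow_plus_n y c j : 0 <= y -> rpow y (c + INR j) = rpow y c * y ^ j.
Proof.
  intros Hy. unfold rpow. destruct (Rlt_dec 0 y).
  rewrite Rpower_plus, Rpower_pow; auto. ring.
Qed.

Lemma series_val u l : Un_cv (fun N => sum_f_R0 u N) l -> series u = l.
Proof.
  intros H. unfold series. apply (UL_sequence (fun N => sum_f_R0 u N)); auto.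
  apply (epsilon_spec (inhabits 0) (fun l => Un_cv (fun N => sum_f_R0 u N) l)). exists l; auto.
Qed.

Lemma series_diff (F G kt : nat -> R) K lF lG :
  Un_cv (fun N => sum_f_R0 F N) lF -> Un_cv (fun N => sum_f_R0 G N) lG ->
  (forall j, G j - F j = K * kt j) -> lF = lG - K * series kt.
Proof.
  intros HF HG Hj.
  pose proof (CV_minus _ _ _ _ HG HF) as H.
  assert (Hs : forall N, sum_f_R0 G N - sum_f_R0 F N = K * sum_f_R0 kt N).
  { intros N. rewrite <- minus_sum. rewrite scal_sum. apply sum_eq. intros; rewrite Hj; ring. }
  destruct (Req_dec K 0) as [E|E].
  - assert (Un_cv (fun i => sum_f_R0 G i - sum_f_R0 F i) 0).
    { intros eps He. exists 0%nat. intros n _. rewrite Hs, E, Rmult_0_l. unfold Rdist; rewrite Rminus_diag, Rabs_R0; auto. }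
    pose proof (UL_sequence _ _ _ H H0). rewrite E. lra.
  - assert (Hk : Un_cv (fun N => sum_f_R0 kt N) ((lG - lF) / K)).
    { assert (Hc : Un_cv (fun _ : nat => / K) (/ K)).
      { intros eps He. exists 0%nat. intros n _. unfold Rdist; rewrite Rminus_diag, Rabs_R0; auto. }
      pose proof (CV_mult _ _ _ _ H Hc) as H2.
      intros eps He. destruct (H2 eps He) as [N HN]. exists N. intros n Hn.
      specialize (HN n Hn). rewrite Hs in HN.
      replace (sum_f_R0 kt n) with (K * sum_f_R0 kt n * / K) by (field; auto).
      replace ((lG - lF) / K) with ((lG - lF) * / K) by (unfold Rdiv; auto). auto. }
    rewrite (series_val _ _ Hk). field. auto.
Qed.

Definition T x y a b j := / INR (Factorial.fact j) * (x / 2) ^ j * Ibeta y (a + INR j) b.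

Lemma T_cv x y a b : 0 <= x -> 0 <= y <= 1 -> 0 < a -> 0 < b -> { l | Un_cv (fun N => sum_f_R0 (T x y a b) N) l }.
Proof.
  intros Hx Hy Ha Hb.
  apply (Rseries_CV_comp _ (fun j => / INR (Factorial.fact j) * (x / 2) ^ j)).
  - intros n. unfold T. pose proof (pos_INR n).
    pose proof (I_bounds y (a + INR n) b ltac:(lra) Hb Hy).
    assert (0 <= / INR (Factorial.fact n) * (x / 2) ^ n).
    { apply Rmult_le_pos. left; apply Rinv_0_lt_compat, INR_fact_lt_0. apply pow_le; lra. }
    split. apply Rmult_le_pos; lra.
    rewrite <- (Rmult_1_r (/ INR (Factorial.fact n) * (x / 2) ^ n)) at 2.
    apply Rmult_le_compat_l; lra.
  - destruct (exist_exp (x/2)) as [l Hl]. exists l. exact Hl.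
Qed.

Lemma ncbeta_T p q x y : ncbeta p q x y = exp (- x / 2) * series (T x y p q).
Proof. reflexivity. Qed.

Definition kt p q x y n := poch (p + q) n / poch p n * (x * y / 2) ^ n / INR (Factorial.fact n).

Lemma kummer_kt p q x y : kummerM (p + q) p (x * y / 2) = series (kt p q x y).
Proof. reflexivity. Qed.

Lemma term1 p q x y j : 0 < p -> 0 < q -> 0 <= y <= 1 ->
  T x y p (q+1) j - T x y p q j = rpow y p * rpow (1-y) q / (q * Beta p q) * kt p q x y j.
Proof.
  intros Hp Hq Hy. unfold T, kt. pose proof (pos_INR j).
  rewrite (I_rec1 y (p + INR j) q) by lra.
  rewrite rpow_plus_n, Beta_poch by lra.
  replace (x * y / 2) with (x / 2 * y) by field. rewrite Rpow_mult_distr.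
  pose proof (poch_pos p j Hp). pose proof (poch_pos (p+q) j ltac:(lra)).
  pose proof (Beta_pos p q Hp Hq). pose proof (INR_fact_neq_0 j).
  field. repeat split; lra.
Qed.

Lemma term3 p q x y j : 1 < p -> 0 < q -> 0 <= y <= 1 ->
  T x y (p-1) (q+1) j - T x y p q j = rpow y (p-1) * rpow (1-y) q / (q * Beta p q) * kt p q x y j.
Proof.
  intros Hp Hq Hy. unfold T, kt. pose proof (pos_INR j).
  pose proof (I_rec2 y (p - 1 + INR j) q ltac:(lra) Hq Hy) as Hr.
  replace (p - 1 + INR j + 1) with (p + INR j) in Hr by ring. rewrite Hr.
  rewrite rpow_plus_n, Beta_poch by lra.
  replace (x * y / 2) with (x / 2 * y) by field. rewrite Rpow_mult_distr.
  pose proof (poch_pos p j ltac:(lra)). pose proof (poch_pos (p+q) j ltac:(lra)).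
  pose proof (Beta_pos p q ltac:(lra) Hq). pose proof (INR_fact_neq_0 j).
  field. repeat split; lra.
Qed.

Theorem mainTheorem4 (p q x y : R) :
  0 < p -> 0 < q -> 0 <= x -> 0 <= y <= 1 ->
  ncbeta p q x y =
    ncbeta p (q + 1) x y
    - exp (- x / 2) / (q * Beta p q) * rpow y p * rpow (1 - y) q
      * kummerM (p + q) p (x * y / 2)
  /\
  ncbetaC p q x y =
    ncbetaC p (q + 1) x y
    + exp (- x / 2) / (q * Beta p q) * rpow y p * rpow (1 - y) q
      * kummerM (p + q) p (x * y / 2)
  /\
  (1 < p ->
   ncbeta p q x y =
    ncbeta (p - 1) (q + 1) x y
    - exp (- x / 2) / (q * Beta p q) * rpow y (p - 1) * rpow (1 - y) q
      * kummerM (p + q) p (x * y / 2)).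
Proof.
  intros Hp Hq Hx Hy.
  pose proof (Beta_pos p q Hp Hq) as HB.
  destruct (T_cv x y p q Hx Hy Hp Hq) as [lF HF].
  destruct (T_cv x y p (q+1) Hx Hy Hp ltac:(lra)) as [lG HG].
  pose proof (series_diff _ _ (kt p q x y) _ _ _ HF HG (fun j => term1 p q x y j Hp Hq Hy)) as K1.
  assert (P1 : ncbeta p q x y =
    ncbeta p (q + 1) x y
    - exp (- x / 2) / (q * Beta p q) * rpow y p * rpow (1 - y) q
      * kummerM (p + q) p (x * y / 2)).
  { rewrite !ncbeta_T, kummer_kt, (series_val _ _ HF), (series_val _ _ HG), K1.
    field. lra. }
  split; [exact P1|split].
  - unfold ncbetaC. rewrite P1. ring.
  - intros Hp1.
    destruct (T_cv x y (p-1) (q+1) Hx Hy ltac:(lra) ltac:(lra)) as [lG' HG'].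
    pose proof (series_diff _ _ (kt p q x y) _ _ _ HF HG' (fun j => term3 p q x y j Hp1 Hq Hy)) as K3.
    rewrite !ncbeta_T, kummer_kt, (series_val _ _ HF), (series_val _ _ HG'), K3.
    field. lra.
Qed.
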